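(* Let $\tilde d_2$ be a metric on $\mathbb R^2$ for which there exist continuous functions $g_1,g_2:[0,\infty)\to[0,\infty)$ with $g_1(1)=g_2(1)=1$ such that $\tilde d_2(x,y)=g_1(|x-y|)$ whenever $x_1=y_1$, and $\tilde d_2(x,y)=g_2(|x-y|)$ whenever $x_2=y_2=0$ (where $x=(x_1,x_2)$, $y=(y_1,y_2)$). Then the following are equivalent: (i) $\tilde d_2=d_2$; (ii) $\mathcal C_{\tilde d_2}(P_1,P_2)=\mathcal C_{d_2}(P_1,P_2)$ for all $P_1,P_2\in\mathbb R^2$.
   Context: $|\cdot|$ is the Euclidean norm. The river metric on $\mathbb R^2$ is $d_2(A,B)=|A_2-B_2|$ if $A_1=B_1$, and $d_2(A,B)=|A_2|+|A_1-B_1|+|B_2|$ if $A_1\neq B_1$, for $A=(A_1,A_2)$, $B=(B_1,B_2)$. For a metric $d$ on a set $M$ and $A,B\in M$, $\mathcal C_d(A,B)=\{X\in M:\ d(X,A)=d(X,B)+d(A,B)<+\infty\}$. *)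

(* Defs.v *)
From Stdlib Require Import Reals.
Open Scope R_scope.

Definition pt := (R * R)%type.

Definition eucl (A B : pt) : R :=
  sqrt ((fst A - fst B) ^ 2 + (snd A - snd B) ^ 2).

Definition river (A B : pt) : R :=
  if Req_EM_T (fst A) (fst B) then Rabs (snd A - snd B)
  else Rabs (snd A) + Rabs (fst A - fst B) + Rabs (snd B).

Definition is_metric (d : pt -> pt -> R) : Prop :=
  (forall x y, 0 <= d x y) /\
  (forall x y, d x y = 0 <-> x = y) /\
  (forall x y, d x y = d y x) /\
  (forall x y z, d x z <= d x y + d y z).

(* C_d(A,B) = { X | d(X,A) = d(X,B) + d(A,B) < +oo }; finiteness is
   automatic since d is real-valued. *)
Definition Cset (d : pt -> pt -> R) (A B : pt) : pt -> Prop :=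
  fun X => d X A = d X B + d A B.

Definition nonneg_cont_on_halfline (g : R -> R) : Prop :=
  (forall t, 0 <= t -> 0 <= g t) /\
  (forall t, 0 <= t -> limit1_in g (fun s => 0 <= s) (g t) t).

(* Main.v *)
Require Import Defs.
From Stdlib Require Import Reals Lra Lia ZArith.
Open Scope R_scope.

Lemma cauchy_lin (g : R -> R) :
  (forall t, 0 <= t -> 0 <= g t) ->
  (forall u v, 0 <= u -> 0 <= v -> g (u + v) = g u + g v) ->
  g 1 = 1 -> forall s, 0 <= s -> g s = s.
Proof.
  intros Hp Ha H1.
  assert (g0 : g 0 = 0).
  { assert (H := Ha 0 0 (Rle_refl 0) (Rle_refl 0)). rewrite Rplus_0_r in H. lra. }
  assert (gn : forall n x, 0 <= x -> g (INR n * x) = INR n * g x).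
  { intros n x Hx. induction n as [|n IH].
    - simpl. rewrite !Rmult_0_l. exact g0.
    - rewrite S_INR. replace ((INR n + 1) * x) with (INR n * x + x) by ring.
      rewrite Ha; [| apply Rmult_le_pos; [apply pos_INR| lra] | lra].
      rewrite IH. ring. }
  assert (bnd : forall x, 0 <= x -> -1 <= g x - x <= 1).
  { intros x Hx. destruct (archimed x) as [Hz1 Hz2].
    set (z := up x) in *.
    assert (Hz0 : (0 < z)%Z) by (apply lt_0_IZR; lra).
    set (n := Z.to_nat (z - 1)).
    assert (Hn : INR n = IZR z - 1).
    { unfold n. rewrite INR_IZR_INZ, Z2Nat.id by lia. rewrite minus_IZR. simpl. ring. }
    set (f := x - INR n).
    assert (Hf0 : 0 <= f) by (unfold f; lra).
    assert (Hf1 : f < 1) by (unfold f; lra).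
    assert (Hx' : x = INR n * 1 + f) by (unfold f; ring).
    assert (Hgx : g x = INR n + g f).
    { rewrite Hx', Ha; [| apply Rmult_le_pos; [apply pos_INR| lra] | lra].
      rewrite gn by lra. rewrite H1. ring. }
    assert (Hg1 : g 1 = g f + g (1 - f)).
    { rewrite <- Ha by lra. f_equal. ring. }
    assert (0 <= g f) by (apply Hp; lra).
    assert (0 <= g (1 - f)) by (apply Hp; lra).
    split; rewrite Hgx; unfold f in *; lra. }
  intros s Hs.
  destruct (Req_dec (g s - s) 0) as [E|E]; [lra|].
  assert (Hh : 0 < Rabs (g s - s)) by (apply Rabs_pos_lt; exact E).
  destruct (archimed_cor1 _ Hh) as [N [HN1 HN2]].
  assert (HNp : 0 < INR N) by (apply lt_0_INR; lia).
  assert (HB := bnd (INR N * s) ltac:(apply Rmult_le_pos; [apply pos_INR|lra])).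
  rewrite gn in HB by lra.
  assert (Habs : INR N * Rabs (g s - s) <= 1).
  { rewrite <- (Rabs_pos_eq (INR N)) by lra. rewrite <- Rabs_mult.
    apply Rabs_le. lra. }
  assert (Rabs (g s - s) <= / INR N).
  { apply (Rmult_le_reg_l (INR N)); [lra|]. rewrite Rinv_r by lra. lra. }
  lra.
Qed.

Lemma eucl_v (x y : pt) : fst x = fst y -> eucl x y = Rabs (snd x - snd y).
Proof.
  intros H. unfold eucl. rewrite H.
  replace ((fst y - fst y) ^ 2 + (snd x - snd y) ^ 2) with (Rsqr (snd x - snd y))
    by (unfold Rsqr; ring).
  apply sqrt_Rsqr_abs.
Qed.

Lemma eucl_h (x y : pt) : snd x = 0 -> snd y = 0 -> eucl x y = Rabs (fst x - fst y).
Proof.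
  intros H1 H2. unfold eucl. rewrite H1, H2.
  replace ((fst x - fst y) ^ 2 + (0 - 0) ^ 2) with (Rsqr (fst x - fst y))
    by (unfold Rsqr; ring).
  apply sqrt_Rsqr_abs.
Qed.

Lemma river_v (x y : pt) : fst x = fst y -> river x y = Rabs (snd x - snd y).
Proof.
  intros H. unfold river. destruct (Req_EM_T (fst x) (fst y)); [reflexivity| contradiction].
Qed.

Lemma river_h (x y : pt) : snd x = 0 -> snd y = 0 -> river x y = Rabs (fst x - fst y).
Proof.
  intros H1 H2. unfold river. rewrite H1, H2.
  destruct (Req_EM_T (fst x) (fst y)) as [e|e].
  - rewrite e. rewrite !Rminus_diag. reflexivity.
  - rewrite Rabs_R0. ring.
Qed.

Theorem theorem3p5 (dt : pt -> pt -> R) :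
  is_metric dt ->
  (exists g1 g2 : R -> R,
      nonneg_cont_on_halfline g1 /\ nonneg_cont_on_halfline g2 /\
      g1 1 = 1 /\ g2 1 = 1 /\
      (forall x y : pt, fst x = fst y -> dt x y = g1 (eucl x y)) /\
      (forall x y : pt, snd x = 0 -> snd y = 0 -> dt x y = g2 (eucl x y))) ->
  ((forall x y : pt, dt x y = river x y) <->
   (forall P1 P2 X : pt, Cset dt P1 P2 X <-> Cset river P1 P2 X)).
Proof.
  intros [Hnn [Hz [Hsym Htri]]] [g1 [g2 [[Hg1p _] [[Hg2p _] [H11 [H21 [Hv Hh]]]]]]].
  split.
  - intros H P1 P2 X. unfold Cset. rewrite !H. tauto.
  - intros HC.
    assert (Hc : forall P1 P2 X, river X P1 = river X P2 + river P1 P2 ->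
                 dt X P1 = dt X P2 + dt P1 P2) by (intros; apply HC; assumption).
    assert (G1 : forall s, 0 <= s -> g1 s = s).
    { apply cauchy_lin; auto. intros u v Hu Hv0.
      assert (E := Hc (0,0) (0,v) (0,u+v)).
      rewrite !river_v in E by reflexivity.
      rewrite !Hv in E by reflexivity. rewrite !eucl_v in E by reflexivity.
      simpl in E.
      replace (u + v - 0) with (u+v) in E by ring.
      replace (u + v - v) with u in E by ring.
      replace (0 - v) with (- v) in E by ring.
      rewrite Rabs_Ropp, !Rabs_pos_eq in E by lra.
      apply E. ring. }
    assert (G2 : forall s, 0 <= s -> g2 s = s).
    { apply cauchy_lin; auto. intros u v Hu Hv0.
      assert (E := Hc (0,0) (v,0) (u+v,0)).
      rewrite !river_h in E by reflexivity.
      rewrite !Hh in E by reflexivity. rewrite !eucl_h in E by reflexivity.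
      simpl in E.
      replace (u + v - 0) with (u+v) in E by ring.
      replace (u + v - v) with u in E by ring.
      replace (0 - v) with (- v) in E by ring.
      rewrite Rabs_Ropp, !Rabs_pos_eq in E by lra.
      apply E. ring. }
    assert (DV : forall x y : pt, fst x = fst y -> dt x y = Rabs (snd x - snd y)).
    { intros x y E. rewrite Hv, eucl_v by assumption. apply G1, Rabs_pos. }
    assert (DH : forall x y : pt, snd x = 0 -> snd y = 0 -> dt x y = Rabs (fst x - fst y)).
    { intros x y E1 E2. rewrite Hh, eucl_h by assumption. apply G2, Rabs_pos. }
    intros [x1 x2] [y1 y2].
    destruct (Req_dec x1 y1) as [e|ne].
    + rewrite DV, river_v by (simpl; assumption). reflexivity.
    + assert (E1 := Hc (y1,y2) (x1,0) (x1,x2)).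
      assert (E2 := Hc (y1,y2) (y1,0) (x1,0)).
      assert (R1 : river (x1,x2) (y1,y2) = Rabs x2 + Rabs (x1 - y1) + Rabs y2).
      { unfold river; simpl. destruct (Req_EM_T x1 y1); [contradiction|reflexivity]. }
      assert (R2 : river (y1,y2) (x1,0) = Rabs y2 + Rabs (y1 - x1)).
      { unfold river; simpl. destruct (Req_EM_T y1 x1); [lra|]. rewrite Rabs_R0; ring. }
      assert (R3 : river (x1,0) (y1,y2) = Rabs (x1 - y1) + Rabs y2).
      { unfold river; simpl. destruct (Req_EM_T x1 y1); [contradiction|]. rewrite Rabs_R0; ring. }
      rewrite (river_v (x1,x2) (x1,0)) in E1 by reflexivity.
      rewrite (river_v (y1,y2) (y1,0)) in E2 by reflexivity.
      rewrite (river_h (x1,0) (y1,0)) in E2 by reflexivity. simpl in E1, E2.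
      rewrite R1, R2 in E1. rewrite R3 in E2.
      rewrite (Rabs_minus_sym y1 x1) in E1.
      replace (x2 - 0) with x2 in E1 by ring. replace (y2 - 0) with y2 in E2 by ring.
      specialize (E1 ltac:(ring)). specialize (E2 ltac:(ring)).
      rewrite R1, E1, (Hsym (y1,y2) (x1,0)), E2.
      rewrite (DV (x1,x2) (x1,0)) by reflexivity. rewrite (DH (x1,0) (y1,0)) by reflexivity.
      rewrite (DV (y1,y2) (y1,0)) by reflexivity. simpl.
      replace (x2 - 0) with x2 by ring. replace (y2 - 0) with y2 by ring. ring.
Qed.
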